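(* Let $G=(V,E,s_0,s_1)$ be a switch graph and $o,d\in V$ with $o\neq d$. Then $\textsc{Run}(G,o,d)$ terminates if and only if there exists an integral solution $\mathbf{x}\in\mathbb{N}_0^E$ satisfying, for all $v\in V$, (a) $\sum_{e\in E^+(v)}x_e-\sum_{e\in E^-(v)}x_e$ equals $1$ if $v=o$, $-1$ if $v=d$, and $0$ otherwise, and (b) $0\le x_{(v,s_1(v))}\le x_{(v,s_0(v))}\le x_{(v,s_1(v))}+1$. In this case, the run profile $\mathbf{x}(G,o,d)$ is the unique integral solution that minimizes $\Sigma(\mathbf{x})=\sum_{e\in E}x_e$ subject to constraints (a) and (b).
   Context: A switch graph is a 4-tuple $G=(V,E,s_0,s_1)$ where $V$ is a finite vertex set, $s_0,s_1:V\to V$, and $E=\{(v,s_0(v)):v\in V\}\cup\{(v,s_1(v)):v\in V\}$ (loops allowed; possibly $s_0(v)=s_1(v)$). For $v\in V$, $E^+(v)$ and $E^-(v)$ denote the outgoing and incoming edges of $v$. The procedure $\textsc{Run}(G,o,d)$: maintain arrays $\mathtt{s\_curr},\mathtt{s\_next}$ indexed by $V$, initially $\mathtt{s\_curr}[v]=s_0(v)$, $\mathtt{s\_next}[v]=s_1(v)$; set $v:=o$; while $v\neq d$: $w:=\mathtt{s\_curr}[v]$, swap $\mathtt{s\_curr}[v],\mathtt{s\_next}[v]$, $v:=w$ (traversing edge $(v,w)$). When the run terminates, its run profile $\mathbf{x}(G,o,d):E\to\mathbb{N}_0$ assigns to each edge the number of times it was traversed. *)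

(* Defs.v *)
From mathcomp Require Import all_boot all_order all_algebra.
Unset Printing Implicit Defensive.
Import GRing.Theory Num.Theory.

Section SwitchGraph.
Variables (V : finType) (s0 s1 : V -> V).

(* Edge set E = {(v,s0 v)} U {(v,s1 v)} as a SET of pairs (so if s0 v = s1 v
   there is a single edge). *)
Definition is_edge (e : V * V) : bool := (e.2 == s0 e.1) || (e.2 == s1 e.1).
Definition edge := {e : V * V | is_edge e}.

Lemma edge0_proof v : is_edge (v, s0 v). Proof. by rewrite /is_edge eqxx. Qed.
Lemma edge1_proof v : is_edge (v, s1 v). Proof. by rewrite /is_edge eqxx orbT. Qed.
Definition e0 (v : V) : edge := exist _ (v, s0 v) (edge0_proof v).
Definition e1 (v : V) : edge := exist _ (v, s1 v) (edge1_proof v).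

Definition net_out (x : {ffun edge -> nat}) (v : V) : int :=
  (\sum_(e : edge | (val e).1 == v) x e)%:Z - (\sum_(e : edge | (val e).2 == v) x e)%:Z.

Definition is_solution (o d : V) (x : {ffun edge -> nat}) : Prop :=
  (forall v : V, net_out x v = (if v == o then 1 else if v == d then -1 else 0)%R)
  /\ (forall v : V, x (e1 v) <= x (e0 v) <= (x (e1 v)).+1)%N.

Definition Sigma (x : {ffun edge -> nat}) : nat := \sum_(e : edge) x e.

Definition unique_min_solution (o d : V) (x : {ffun edge -> nat}) : Prop :=
  is_solution o d x /\
  forall y, is_solution o d y -> (Sigma x <= Sigma y)%N /\ (Sigma y = Sigma x -> y = x).

(* Run(G,o,d).  A state is (current vertex, switch bits); bit b v = false means
   s_curr[v] = s0 v, true means s_curr[v] = s1 v. *)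
Definition state := (V * {ffun V -> bool})%type.
Definition curr (b : {ffun V -> bool}) (v : V) : V := if b v then s1 v else s0 v.
Definition flip (b : {ffun V -> bool}) (v : V) : {ffun V -> bool} :=
  [ffun u => if u == v then ~~ b u else b u].

Definition step (d : V) (st : state) : state :=
  let: (v, b) := st in
  if v == d then st else (curr b v, flip b v).

Definition init (o : V) : state := (o, [ffun _ => false]).
Definition state_at (o d : V) (k : nat) : state := iter k (step d) (init o).

Definition run_terminates (o d : V) : Prop := exists n, (state_at o d n).1 = d.

(* number of traversals of each edge during the first n iterations
   (iterations at d are not loop iterations and are not counted) *)
Definition profile (o d : V) (n : nat) : {ffun edge -> nat} :=
  [ffun e : edge => \sum_(k < n)
     let: (v, b) := state_at o d k in
     ((v != d) && ((v, curr b v) == val e) : nat)].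

End SwitchGraph.

(* Main.v *)
Require Import Defs.
From mathcomp Require Import all_boot all_order all_algebra.
From mathcomp Require Import zify.
Import GRing.Theory Num.Theory.

Section Pf.
Variables (V : finType) (s0 s1 : V -> V) (o d : V).
Local Notation edge := (edge V s0 s1).
Local Notation st k := (state_at V s0 s1 o d k).
Local Notation pos k := (st k).1.
Local Notation bits k := (st k).2.
Local Notation curr := (curr V s0 s1).
Local Notation e0 := (e0 V s0 s1).
Local Notation e1 := (e1 V s0 s1).
Local Notation prof n := (profile V s0 s1 o d n).

Lemma curr_edge b u : is_edge V s0 s1 (u, curr b u).
Proof. by rewrite /is_edge /Defs.curr /=; case: (b u); rewrite eqxx ?orbT. Qed.
Definition tedge b u : edge := exist _ (u, curr b u) (curr_edge b u).

Lemma stS k : st k.+1 = step V s0 s1 d (st k).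
Proof. by rewrite /state_at iterS. Qed.

Lemma pos_d k : pos k = d -> st k.+1 = st k.
Proof. rewrite stS /step; case: (st k) => v b /= ->; by rewrite eqxx. Qed.

Lemma pos_nd k : pos k != d -> st k.+1 = (curr (bits k) (pos k), flip V (bits k) (pos k)).
Proof. rewrite stS /step; case: (st k) => v b /= /negbTE -> //. Qed.

Lemma pos_d_after k m : pos k = d -> pos (k + m) = d.
Proof. move=> H; elim: m => [|m IH]; first by rewrite addn0. by rewrite addnS (pos_d _ IH). Qed.

Lemma profE n e : prof n e = \sum_(k < n) ((pos k != d) && (tedge (bits k) (pos k) == e)).
Proof. rewrite ffunE; apply: eq_bigr => k _; by case: (st k). Qed.

Lemma profS n e : prof n.+1 e = prof n e + ((pos n != d) && (tedge (bits n) (pos n) == e)).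
Proof. by rewrite !profE big_ord_recr. Qed.

Lemma sum_sel (T : finType) (P : pred T) (a : T) (c : bool) :
  \sum_(e | P e) ((c && (a == e)) : nat) = (c && P a).
Proof.
case: (boolP (P a)) => Pa.
  rewrite (bigD1 a) //= eqxx andbT big1 ?addn0 ?andbT // => e /andP[_ ne].
  by rewrite eq_sym (negbTE ne) andbF.
rewrite andbF big1 // => e Pe; case: eqP => [ae|]; last by rewrite andbF.
by move: Pa; rewrite ae Pe.
Qed.

Definition outp n v := \sum_(k < n) ((pos k != d) && (pos k == v)).
Definition inp n v := \sum_(k < n) ((pos k != d) && (curr (bits k) (pos k) == v)).

Lemma prof_out n v : \sum_(e : edge | (val e).1 == v) prof n e = outp n v.
Proof.
under eq_bigr => e _ do rewrite profE.
rewrite exchange_big /outp; apply: eq_bigr => k _.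
by rewrite (sum_sel _ (fun e : edge => (val e).1 == v)).
Qed.

Lemma prof_in n v : \sum_(e : edge | (val e).2 == v) prof n e = inp n v.
Proof.
under eq_bigr => e _ do rewrite profE.
rewrite exchange_big /inp; apply: eq_bigr => k _.
by rewrite (sum_sel _ (fun e : edge => (val e).2 == v)).
Qed.

Lemma Sigma_prof n : Sigma V s0 s1 (prof n) = \sum_(k<n) (pos k != d).
Proof.
rewrite /Sigma; under eq_bigr => e _ do rewrite profE.
rewrite exchange_big; apply: eq_bigr => k _.
by rewrite (sum_sel _ (fun _ : edge => true)) andbT.
Qed.

Lemma flow n v : outp n v + (pos n == v) = inp n v + (pos 0 == v).
Proof.
elim: n => [|n IH]; first by rewrite /outp /inp !big_ord0.
rewrite /outp /inp !big_ord_recr /= -/(outp n v) -/(inp n v).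
case: (eqVneq (pos n) d) => [Hd|Hnd].
  by rewrite -stS (pos_d _ Hd) !addn0.
rewrite -stS (pos_nd _ Hnd) /=; change (pos 0) with o in IH; lia.
Qed.


Lemma tedge_e0 b v : s0 v != s1 v -> (tedge b v == e0 v) = ~~ b v.
Proof.
move=> ne; rewrite -val_eqE /= /Defs.curr; case: (b v); rewrite ?eqxx //=.
by rewrite xpair_eqE eqxx /= eq_sym (negbTE ne).
Qed.

Lemma tedge_e1 b v : s0 v != s1 v -> (tedge b v == e1 v) = b v.
Proof.
move=> ne; rewrite -val_eqE /= /Defs.curr; case: (b v); rewrite ?eqxx //=.
by rewrite xpair_eqE eqxx /= (negbTE ne).
Qed.

Lemma tedge_ne0 b u v : u != v -> (tedge b u == e0 v) = false.
Proof. by move=> ne; rewrite -val_eqE /= xpair_eqE (negbTE ne). Qed.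
Lemma tedge_ne1 b u v : u != v -> (tedge b u == e1 v) = false.
Proof. by move=> ne; rewrite -val_eqE /= xpair_eqE (negbTE ne). Qed.

Lemma e01 v : s0 v = s1 v -> e0 v = e1 v.
Proof. by move=> H; apply: val_inj => /=; rewrite H. Qed.

Lemma tedge_eq b v : s0 v = s1 v -> tedge b v = e0 v.
Proof. by move=> H; apply: val_inj => /=; rewrite /Defs.curr; case: (b v); rewrite ?H. Qed.

Lemma edge_cases (e : edge) v : (val e).1 == v -> e != e0 v -> e = e1 v.
Proof.
case: e => [[u w] H] /= /eqP Hu; subst u => ne; apply: val_inj => /=.
move: (H); rewrite /is_edge /= => /orP[/eqP Hw|/eqP -> //].
by move: ne; rewrite -val_eqE /= Hw eqxx.
Qed.

Lemma out_dec (F : edge -> nat) v :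
  \sum_(e | (val e).1 == v) F e = F (e0 v) + (if s0 v == s1 v then 0 else F (e1 v)).
Proof.
rewrite (bigD1 (e0 v)) //=; case: eqP => Hs.
  rewrite big1 // => e /andP[ev ne].
  have E := edge_cases _ _ ev ne; by move: ne; rewrite E -(e01 _ Hs) eqxx.
rewrite (bigD1 (e1 v)) /=; last first.
  by rewrite eqxx /= -val_eqE /= xpair_eqE eqxx /= eq_sym; apply/eqP.
rewrite big1 ?addn0 // => e /andP[/andP[ev ne] ne1].
have E := edge_cases _ _ ev ne; by move: ne1; rewrite E eqxx.
Qed.

Lemma bits_inv n v : s0 v != s1 v -> prof n (e0 v) = prof n (e1 v) + bits n v.
Proof.
move=> ne; elim: n => [|n IH]; first by rewrite !profE !big_ord0 /= ffunE.
rewrite !profS.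
case: (eqVneq (pos n) d) => [Hd|Hnd].
  by rewrite (pos_d _ Hd) /= !addn0.
rewrite (pos_nd _ Hnd) /=.
have -> : flip V (bits n) (pos n) v = (if v == pos n then ~~ bits n v else bits n v) by rewrite ffunE.
case: (eqVneq v (pos n)) => [Hv|Hv].
  rewrite -Hv tedge_e0 // tedge_e1 //.
  by move: IH; case: (bits n v) => /= ->; lia.
have Hv' : pos n != v by rewrite eq_sym.
by rewrite tedge_ne0 // tedge_ne1 // !addn0.
Qed.



Lemma prof_le x : is_solution V s0 s1 o d x -> forall n e, prof n e <= x e.
Proof.
move=> [Ha Hb]; elim=> [|n IH] e; first by rewrite profE big_ord0.
rewrite profS.
case: (eqVneq (pos n) d) => [Hd|Hnd]; first by rewrite /= addn0.
case: (eqVneq (tedge (bits n) (pos n)) e) => [He|Hne]; last by rewrite andbF addn0.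
rewrite andbT addn1 ltnNge; apply/negP => Hge.
have Heq : prof n e = x e by apply/eqP; rewrite eqn_leq IH Hge.
have Hout : \sum_(e | (val e).1 == pos n) x e <= outp n (pos n).
  rewrite -prof_out !out_dec.
  case: (eqVneq (s0 (pos n)) (s1 (pos n))) => Hs.
    by rewrite -(tedge_eq (bits n) _ Hs) He Heq.
  have Hi := bits_inv n _ Hs; have Hbb := Hb (pos n).
  move: He; case Eb: (bits n (pos n)) => He.
    have He1 : e = e1 (pos n) by apply/eqP; rewrite -He tedge_e1.
    move: Hi Hbb; rewrite Eb -He1 Heq /=; lia.
  have He0 : e = e0 (pos n) by apply/eqP; rewrite -He tedge_e0 // Eb.
  move: Hi Hbb; rewrite Eb -He0 Heq /=; lia.
have Hin : inp n (pos n) <= \sum_(e | (val e).2 == pos n) x e.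
  by rewrite -prof_in; apply: leq_sum => e' _; exact: IH.
have Hfl := flow n (pos n).
have Hx := Ha (pos n).
rewrite /net_out (negbTE Hnd) in Hx.
change (pos 0) with o in Hfl.
rewrite eqxx in Hfl.
move: Hx Hfl Hout Hin.
set A := \sum_(e | (val e).1 == pos n) x e.
set B := \sum_(e | (val e).2 == pos n) x e.
case: (eqVneq (pos n) o) => [->|Ho].
  move=> Hx; have : A = B.+1 by lia. simpl; lia.
move=> Hx; have : A = B by lia. simpl; lia.
Qed.



Lemma prof_sol n : o != d -> pos n = d -> is_solution V s0 s1 o d (prof n).
Proof.
move=> od Hn; split=> v.
  rewrite /net_out prof_out prof_in.
  have := flow n v; rewrite Hn; change (pos 0) with o.
  case: (eqVneq v o) => [->|Ho].
    rewrite eq_sym (negbTE od) /= => H; lia.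
  case: (eqVneq v d) => [->|Hd].
    rewrite /= => H; lia.
  rewrite /= => H; lia.
case: (eqVneq (s0 v) (s1 v)) => Hs.
  by rewrite (e01 _ Hs) leqnn leqnSn.
rewrite (bits_inv n _ Hs); case: (bits n v) => /=; lia.
Qed.

Lemma sum_eq_le (T : finType) (f g : T -> nat) :
  (forall i, f i <= g i) -> \sum_i g i = \sum_i f i -> forall i, g i = f i.
Proof.
move=> le eqs i; move: eqs; rewrite (bigD1 i) //= [X in _ = X](bigD1 i) //=.
have : \sum_(j | j != i) f j <= \sum_(j | j != i) g j by apply: leq_sum.
have := le i; lia.
Qed.

Lemma stay n : pos n != d -> forall k, k <= n -> pos k != d.
Proof.
move=> Hn k kn; apply/eqP => Hk; move: Hn; rewrite -(subnKC kn) pos_d_after //.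
by rewrite eqxx.
Qed.

End Pf.

Theorem theorem4 (V : finType) (s0 s1 : V -> V) (o d : V) :
  o != d ->
  (run_terminates V s0 s1 o d <-> exists x, is_solution V s0 s1 o d x) /\
  (forall n : nat, (state_at V s0 s1 o d n).1 = d ->
     unique_min_solution V s0 s1 o d (profile V s0 s1 o d n)).
Proof.
move=> od; split; first split.
- by case=> n Hn; exists (profile V s0 s1 o d n); apply: prof_sol.
- case=> x Hx; exists (Sigma V s0 s1 x).+1.
  set N := (Sigma V s0 s1 x).+1.
  case: (eqVneq (state_at V s0 s1 o d N).1 d) => // HN.
  have H1 : Sigma V s0 s1 (profile V s0 s1 o d N) = N.
    rewrite Sigma_prof -[RHS]card_ord -sum1_card; apply: eq_bigr => k _.
    by rewrite (stay _ _ _ _ _ _ HN) // ltnW.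
  have H2 : Sigma V s0 s1 (profile V s0 s1 o d N) <= Sigma V s0 s1 x.
    by apply: leq_sum => e _; apply: prof_le.
  by move: H2; rewrite H1 /N ltnn.
- move=> n Hn; split; first exact: prof_sol.
  move=> y Hy; have le := prof_le _ _ _ _ _ _ Hy n.
  split; first by apply: leq_sum => e _; apply: le.
  move=> eqS; apply/ffunP => e.
  exact: (sum_eq_le _ _ _ le eqS).
Qed.
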